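(* Given full second-order logic (full semantics): (1) for any model $\mathcal{M}$ of $\mathsf{BLT}$, the set $\{s\in M:\mathcal{M}\models s\text{ is a boolean-level}\}$ is well-ordered by $\in^{\mathcal{M}}$; (2) for every ordinal $\alpha>0$ there is a model $\mathcal{M}$ of $\mathsf{BLT}$ whose boolean-levels, ordered by $\in^{\mathcal{M}}$, are isomorphic to $\alpha$; (3) given any two models of $\mathsf{BLT}$, one is isomorphic to an initial segment of the other.
   Context: $\overline{a}=\{x:x\notin a\}$. $\mathrm{bpot}(a)=\{x:\exists c(c\in a\wedge c\notin c\wedge(x\subseteq c\vee\overline{x}\subseteq c))\}$. A boolean-history is $h$ with $h\notin h$ and $x=\mathrm{bpot}(x\cap h)$ for $x\in h$; a boolean-level is $\mathrm{bpot}(h)$ for a boolean-history $h$. $\mathsf{BLT}$ is the second-order theory (only primitive $\in$) with axioms Extensionality; Complements: $\forall a\exists c(c=\overline{a}\wedge(a\notin a\leftrightarrow c\in c))$; Separation$_\notin$: $\forall F\forall a(a\notin a\to\exists b(b\notin b\wedge\forall x(x\in b\leftrightarrow(F(x)\wedge x\in a))))$; Stratification$_\notin$: every $a\notin a$ is a subset of some boolean-level. In $\mathsf{BLT}$, for $a\notin a$ let $\mathrm{B}(a)$ be the $\in$-least boolean-level having $a$ as a subset, and for $a\in a$ let $\mathrm{B}(a)=\mathrm{B}(\overline{a})$. For models $\mathcal{A},\mathcal{M}$ of $\mathsf{BLT}$, $\mathcal{A}$ is an initial segment of $\mathcal{M}$ iff either $\mathcal{A}=\mathcal{M}$ or there is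 $s$ with $\mathcal{M}\models s\text{ is a boolean-level}$ such that $\mathcal{A}$ is isomorphic to the substructure of $\mathcal{M}$ with domain $\{x\in M:\mathcal{M}\models\mathrm{B}(x)\in s\}$. *)

(* Defs.v *)
(* Models of BLT are structures (M, mem) with M : Type and
   mem : M -> M -> Prop.  Full second-order semantics: second-order
   variables range over ALL predicates M -> Prop. *)

Section BLT.
Variables (M : Type) (mem : M -> M -> Prop).

Definition subsetM (x c : M) : Prop := forall y, mem y x -> mem y c.

Definition csubsetM (x c : M) : Prop := forall y, ~ mem y x -> mem y c.

Definition in_bpot (a : M -> Prop) (x : M) : Prop :=
  exists c, a c /\ ~ mem c c /\ (subsetM x c \/ csubsetM x c).

Definition is_bhistory (h : M) : Prop :=
  ~ mem h h /\
  forall x, mem x h ->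
    forall y, mem y x <-> in_bpot (fun c => mem c x /\ mem c h) y.

Definition is_blevel (s : M) : Prop :=
  exists h, is_bhistory h /\ forall y, mem y s <-> in_bpot (fun c => mem c h) y.

Definition BLT : Prop :=
  (forall a b, (forall x, mem x a <-> mem x b) -> a = b) /\
  (forall a, exists c, (forall x, mem x c <-> ~ mem x a) /\ (~ mem a a <-> mem c c)) /\
  (forall (F : M -> Prop) a, ~ mem a a ->
     exists b, ~ mem b b /\ forall x, mem x b <-> (F x /\ mem x a)) /\
  (forall a, ~ mem a a -> exists s, is_blevel s /\ subsetM a s).

Definition least_level_over (x b : M) : Prop :=
  is_blevel b /\ subsetM x b /\
  forall b', is_blevel b' -> subsetM x b' -> b' = b \/ mem b b'.

Definition is_B (x b : M) : Prop :=
  (~ mem x x /\ least_level_over x b) \/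
  (mem x x /\ exists c, (forall y, mem y c <-> ~ mem y x) /\ least_level_over c b).

End BLT.

Definition well_ordered_on {T : Type} (P : T -> Prop) (R : T -> T -> Prop) : Prop :=
  (forall x y z, P x -> P y -> P z -> R x y -> R y z -> R x z) /\
  (forall x, P x -> ~ R x x) /\
  (forall x y, P x -> P y -> R x y \/ x = y \/ R y x) /\
  (forall Q : T -> Prop, (forall x, Q x -> P x) -> (exists x, Q x) ->
     exists m, Q m /\ forall y, Q y -> m = y \/ R m y).

Definition iso_to_sub {A M : Type} (memA : A -> A -> Prop)
  (memM : M -> M -> Prop) (D : M -> Prop) : Prop :=
  exists f : A -> M,
    (forall a, D (f a)) /\
    (forall a1 a2, f a1 = f a2 -> a1 = a2) /\
    (forall y, D y -> exists a, f a = y) /\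
    (forall a1 a2, memA a1 a2 <-> memM (f a1) (f a2)).

Definition initial_segment {A M : Type} (memA : A -> A -> Prop)
  (memM : M -> M -> Prop) : Prop :=
  iso_to_sub memA memM (fun _ => True) \/
  exists s, is_blevel M memM s /\
    iso_to_sub memA memM (fun x => exists b, is_B M memM x b /\ memM b s).

(* Main.v *)
Require Import Defs.
From Stdlib Require Import Classical ClassicalEpsilon FunctionalExtensionality PropExtensionality ProofIrrelevance.

Section Internal.
Variable M : Type.
Variable mem : M -> M -> Prop.
Hypothesis HB : BLT M mem.

Lemma ext : forall a b, (forall x, mem x a <-> mem x b) -> a = b.
Proof. destruct HB as [H _]. exact H. Qed.
Lemma compl : forall a, exists c, (forall x, mem x c <-> ~ mem x a) /\ (~ mem a a <-> mem c c).
Proof. destruct HB as [_ [H _]]; exact H. Qed.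
Lemma sep : forall (F : M -> Prop) a, ~ mem a a ->
  exists b, ~ mem b b /\ forall x, mem x b <-> (F x /\ mem x a).
Proof. destruct HB as [_ [_ [H _]]]; exact H. Qed.
Lemma strat : forall a, ~ mem a a -> exists s, is_blevel M mem s /\ subsetM M mem a s.
Proof. destruct HB as [_ [_ [_ H]]]; exact H. Qed.

Notation bp := (in_bpot M mem).
Notation level := (is_blevel M mem).
Notation sub := (subsetM M mem).
Notation csub := (csubsetM M mem).

Lemma bp_ext : forall A B : M -> Prop, (forall c, ~ mem c c -> (A c <-> B c)) ->
  forall y, bp A y <-> bp B y.
Proof.
  intros A B H y; unfold in_bpot; split; intros [c [Hc [Ho Hs]]]; exists c;
  repeat split; auto; apply H; auto.
Qed.

Lemma bp_mono : forall A B : M -> Prop, (forall c, ~ mem c c -> A c -> B c) ->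
  forall y, bp A y -> bp B y.
Proof.
  intros A B H y [c [Hc [Ho Hs]]]; exists c; repeat split; auto.
Qed.

Definition HC (H : M -> Prop) :=
  (forall x, H x -> ~ mem x x) /\
  (forall x, H x -> forall y, mem y x <-> bp (fun c => mem c x /\ H c) y).

Lemma HC_equiv : forall H K, (forall c, H c <-> K c) -> HC H -> HC K.
Proof.
  intros H K E [H1 H2]; split.
  - intros x Kx; apply H1, E, Kx.
  - intros x Kx y; rewrite (H2 x (proj2 (E x) Kx) y).
    apply bp_ext; intros c _; rewrite (E c); tauto.
Qed.

Section HCfacts.
Variable H : M -> Prop.
Hypothesis HH : HC H.

Lemma HC_ord : forall x, H x -> ~ mem x x.
Proof. exact (proj1 HH). Qed.
Lemma HC_mem : forall x, H x -> forall y, mem y x <-> bp (fun c => mem c x /\ H c) y.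
Proof. exact (proj2 HH). Qed.

Lemma HC_wf : forall Q : M -> Prop, (forall x, Q x -> H x) -> (exists x, Q x) ->
  exists m, Q m /\ forall y, Q y -> ~ mem y m.
Proof.
  intros Q HQ [b0 Qb0].
  apply NNPP; intro Hno.
  assert (Hn : forall m, Q m -> exists y, Q y /\ mem y m).
  { intros m Qm. apply NNPP; intro Hc. apply Hno. exists m. split; auto.
    intros y Qy Hy. apply Hc. exists y; auto. }
  destruct (sep (fun y => forall b, Q b -> mem y b) b0 (HC_ord b0 (HQ b0 Qb0))) as [D [HD HDm]].
  assert (HDb : forall b, Q b -> mem D b).
  { intros b Qb. destruct (Hn b Qb) as [b' [Qb' Hb']].
    apply (HC_mem b (HQ b Qb)). exists b'. split; [split; auto|]. split.
    - apply HC_ord; auto.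
    - left. intros y Hy. apply HDm in Hy. apply (proj1 Hy b' Qb'). }
  apply HD. apply HDm. split; auto.
Qed.

Lemma HC_ind : forall P : M -> Prop,
  (forall x, H x -> (forall y, H y -> mem y x -> P y) -> P x) -> forall x, H x -> P x.
Proof.
  intros P IH x Hx. apply NNPP; intro HP.
  destruct (HC_wf (fun x => H x /\ ~ P x)) as [m [[Hm Pm] Hmin]].
  - tauto.
  - exists x; auto.
  - apply Pm, IH; auto. intros y Hy Hym. apply NNPP; intro Py.
    apply (Hmin y); auto.
Qed.

Lemma HC_no2 : forall a d, H a -> H d -> mem a d -> mem d a -> False.
Proof.
  intros a d Ha Hd Had Hda.
  destruct (HC_wf (fun x => x = a \/ x = d)) as [m [Hm Hmin]].
  - intros x [-> | ->]; auto.
  - exists a; auto.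
  - destruct Hm as [-> | ->].
    + apply (Hmin d); auto.
    + apply (Hmin a); auto.
Qed.

Lemma HC_memsub : forall x y, H x -> H y -> mem y x ->
  exists c, (mem c x /\ H c) /\ sub y c.
Proof.
  intros x y Hx Hy Hyx. apply (HC_mem x Hx) in Hyx.
  destruct Hyx as [c [[Hcx Hc] [Hco [Hs | Hs]]]].
  - exists c; auto.
  - exfalso. assert (mem c y) by (apply NNPP; intro; apply Hco; apply Hs; auto).
    assert (mem y c) by (apply Hs; apply HC_ord; auto).
    apply (HC_no2 y c); auto.
Qed.

Lemma HC_T : forall e, H e -> forall f, H f -> mem f e -> sub f e.
Proof.
  apply (HC_ind (fun e => forall f, H f -> mem f e -> sub f e)).
  intros e He IH f Hf Hfe y Hy.
  destruct (HC_memsub e f He Hf Hfe) as [g [[Hge Hg] Hfg]].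
  assert (Hyg : mem y g) by auto.
  apply (HC_mem g Hg) in Hyg.
  destruct Hyg as [k [[Hkg Hk] [Hko Hs]]].
  assert (Hkg' : sub k g) by (apply IH; auto).
  apply (HC_mem e He). exists g. split; [auto|]. split; [apply HC_ord; auto|].
  destruct Hs as [Hs | Hs]; [left | right]; intros z Hz; apply Hkg'; apply Hs; auto.
Qed.

Lemma HC_trans : forall z c b, H c -> H b -> mem z c -> mem c b -> mem z b.
Proof. intros z c b Hc Hb H1 H2. apply (HC_T b Hb c Hc H2); auto. Qed.

Lemma HC_self : forall x, H x -> bp H x.
Proof.
  intros x Hx. exists x. split; auto. split; [apply HC_ord; auto|]. left; intros y; auto.
Qed.

Lemma HC_restrict : forall x, H x -> HC (fun c => mem c x /\ H c).
Proof.
  intros x Hx. split.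
  - intros y [_ Hy]; apply HC_ord; auto.
  - intros y [Hyx Hy] z. rewrite (HC_mem y Hy z). apply bp_ext. intros c _. split.
    + intros [Hcy Hc]. split; auto. split; auto. apply (HC_trans c y x); auto.
    + intros [Hcy [_ Hc]]; auto.
Qed.

End HCfacts.

Lemma low_eq : forall H K x y, HC H -> HC K -> H x -> K y ->
  (forall c, (mem c x /\ H c) <-> (mem c y /\ K c)) -> x = y.
Proof.
  intros H K x y HH HK Hx Ky E. apply ext. intros z.
  rewrite (HC_mem H HH x Hx z), (HC_mem K HK y Ky z). apply bp_ext. intros c _; apply E.
Qed.

Lemma cross : forall H K, HC H -> HC K -> forall x y, H x -> K y ->
  x = y \/ (K x /\ mem x y) \/ (H y /\ mem y x).
Proof.
  intros H K HH HK x0 y0 Hx0 Ky0. apply NNPP; intro Hbad.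
  set (S := fun x y => x = y \/ (K x /\ mem x y) \/ (H y /\ mem y x)).
  destruct (HC_wf H HH (fun x => H x /\ exists y, K y /\ ~ S x y)) as [x [[Hx [y1 [Ky1 Sy1]]] Hxmin]];
    [tauto | exists x0; split; auto; exists y0; auto |].
  destruct (HC_wf K HK (fun y => K y /\ ~ S x y)) as [y [[Ky Sxy] Hymin]]; [tauto | exists y1; auto |].
  apply Sxy. left. apply (low_eq H K x y HH HK Hx Ky). intros c. split.
  - intros [Hcx Hc].
    assert (Scy : S c y).
    { apply NNPP; intro Hn. apply (Hxmin c); auto. split; auto. exists y; auto. }
    destruct Scy as [-> | [[Kc Hcy] | [Hy Hyc]]].
    + exfalso; apply Sxy; right; right; auto.
    + auto.
    + exfalso; apply Sxy; right; right. split; auto. apply (HC_trans H HH y c x); auto.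
  - intros [Hcy Kc].
    assert (Sxc : S x c).
    { apply NNPP; intro Hn. apply (Hymin c); auto. }
    destruct Sxc as [-> | [[Kx Hxc] | [Hc Hcx]]].
    + exfalso; apply Sxy; right; left; auto.
    + exfalso; apply Sxy; right; left. split; auto. apply (HC_trans K HK x c y); auto.
    + auto.
Qed.

Lemma HC_cmp : forall H K, HC H -> HC K ->
  (forall c, H c <-> K c) \/
  (exists x, H x /\ forall c, K c <-> (mem c x /\ H c)) \/
  (exists y, K y /\ forall c, H c <-> (mem c y /\ K c)).
Proof.
  intros H K HH HK.
  destruct (classic (exists x, H x /\ ~ K x)) as [Ex | NEx].
  - right; left.
    destruct (HC_wf H HH (fun x => H x /\ ~ K x)) as [x [[Hx Kx] Hmin]]; [tauto|auto|].
    exists x. split; auto. intros c. split.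
    + intros Kc. destruct (cross H K HH HK x c Hx Kc) as [-> | [[Kx' _] | [Hc Hcx]]].
      * contradiction.
      * contradiction.
      * auto.
    + intros [Hcx Hc]. apply NNPP; intro Kc. apply (Hmin c); auto.
  - destruct (classic (exists y, K y /\ ~ H y)) as [Ey | NEy].
    + right; right.
      destruct (HC_wf K HK (fun y => K y /\ ~ H y)) as [y [[Ky Hy] Hmin]]; [tauto|auto|].
      exists y. split; auto. intros c. split.
      * intros Hc. destruct (cross H K HH HK c y Hc Ky) as [-> | [[Kc Hcy] | [Hy' _]]].
        -- contradiction.
        -- auto.
        -- contradiction.
      * intros [Hcy Kc]. apply NNPP; intro Hc. apply (Hmin c); auto.
    + left. intros c. split; intro Hc.
      * apply NNPP; intro Kc. apply NEx; eauto.
      * apply NNPP; intro Kc. apply NEy; eauto.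
Qed.

Definition LevH (H : M -> Prop) (s : M) :=
  HC H /\ (exists h, ~ mem h h /\ forall c, mem c h <-> H c) /\ forall y, mem y s <-> bp H y.

Lemma level_LevH : forall s, level s -> exists H, LevH H s.
Proof.
  intros s [h [[Hh Hhist] Hs]].
  destruct (sep (fun c => ~ mem c c) h Hh) as [R [HR HRm]].
  exists (fun c => mem c h /\ ~ mem c c). split; [|split].
  - split.
    + intros x [_ Hx]; auto.
    + intros x [Hxh Hx] y. rewrite (Hhist x Hxh y). apply bp_ext. intros c Hc; tauto.
  - exists R. split; auto. intros c; rewrite HRm; tauto.
  - intros y. rewrite Hs. apply bp_ext. intros c Hc; tauto.
Qed.

Lemma russell : forall s, ~ mem s s -> ~ (forall y, mem y s).
Proof.
  intros s Hs Hall.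
  destruct (sep (fun c => ~ mem c c) s Hs) as [r [Hr Hrm]].
  apply Hr. apply Hrm. split; auto.
Qed.

Lemma HC_sub_s : forall H s, HC H -> (forall y, mem y s <-> bp H y) -> forall x, H x -> sub x s.
Proof.
  intros H s HH Hs x Hx y Hy. apply Hs. apply (HC_mem H HH x Hx) in Hy.
  revert Hy. apply bp_mono. intros c _ [_ Hc]; auto.
Qed.

Lemma LevH_ord : forall H s, LevH H s -> ~ mem s s.
Proof.
  intros H s [HH [[R [HR HRm]] Hs]] Hss.
  assert (Hsub : forall x, H x -> sub x s) by (apply HC_sub_s; auto).
  apply Hs in Hss. destruct Hss as [c [Hc [Hco [Hsc | Hsc]]]].
  - apply Hco. apply Hsc. apply Hs. apply HC_self; auto.
  - assert (Hall : forall y, mem y s).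
    { intros y. destruct (classic (mem y s)) as [|Hn]; auto. apply (Hsub c Hc). apply Hsc; auto. }
    assert (HRs := Hall R). apply Hs in HRs.
    destruct HRs as [c' [Hc' [Hc'o [HRc | HRc]]]].
    + apply Hc'o. apply HRc. apply HRm; auto.
    + destruct (sep (fun y => ~ mem y y) c' Hc'o) as [r [Hr Hrm]].
      assert (Hrc : ~ mem r c').
      { intro Hrc. apply Hr. apply Hrm. split; auto. }
      assert (Hr' : H r).
      { apply HRm. apply NNPP; intro Hn. apply Hrc. apply HRc; auto. }
      destruct (cross H H HH HH r c' Hr' Hc') as [Heq | [[_ Hrc'] | [_ Hcr]]].
      * subst r.
        destruct (compl c') as [d [Hd Hdd]].
        assert (Hdd' : mem d d) by (apply Hdd; auto).
        assert (HdR : ~ mem d R).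
        { intro HdR. apply HRm in HdR. apply (HC_ord H HH d HdR); auto. }
        assert (Hdc : mem d c') by (apply HRc; auto).
        apply Hrm in Hdc. destruct Hdc as [Hdo _]. auto.
      * contradiction.
      * apply Hc'o. apply Hrm in Hcr. tauto.
Qed.

Lemma mk_level : forall H s, HC H -> ~ mem s s -> (forall y, mem y s <-> bp H y) -> level s.
Proof.
  intros H s HH Hs Hsm.
  destruct (sep H s Hs) as [h [Hh Hhm]].
  assert (Hhc : forall c, mem c h <-> H c).
  { intros c; rewrite Hhm. split; [tauto|]. intros Hc; split; auto.
    apply Hsm, HC_self; auto. }
  exists h. split; [split|].
  - auto.
  - intros x Hx y. apply Hhc in Hx. rewrite (HC_mem H HH x Hx y).
    apply bp_ext; intros c _. rewrite Hhc; tauto.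
  - intros y. rewrite Hsm. apply bp_ext; intros c _; rewrite Hhc; tauto.
Qed.

Lemma HC_elem_level : forall H x, HC H -> H x -> level x.
Proof.
  intros H x HH Hx. apply (mk_level (fun c => mem c x /\ H c)).
  - apply HC_restrict; auto.
  - apply HC_ord with H; auto.
  - apply HC_mem; auto.
Qed.

Lemma LevH_cmp : forall H K s t, LevH H s -> LevH K t ->
  s = t \/ (K s /\ mem s t) \/ (H t /\ mem t s).
Proof.
  intros H K s t [HH [_ Hs]] [HK [_ Ht]].
  destruct (HC_cmp H K HH HK) as [E | [[x [Hx Ex]] | [y [Ky Ey]]]].
  - left. apply ext. intros z. rewrite Hs, Ht. apply bp_ext. intros c _; auto.
  - assert (t = x).
    { apply ext; intros z. rewrite Ht, (HC_mem H HH x Hx z). apply bp_ext; intros c _; auto. }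
    subst t. right; right. split; auto. apply Hs, HC_self; auto.
  - assert (s = y).
    { apply ext; intros z. rewrite Hs, (HC_mem K HK y Ky z). apply bp_ext; intros c _; auto. }
    subst s. right; left. split; auto. apply Ht, HC_self; auto.
Qed.

Lemma LevH_mem : forall H K s t, LevH H s -> LevH K t -> mem t s -> H t.
Proof.
  intros H K s t Hs Ht Hts.
  destruct (LevH_cmp H K s t Hs Ht) as [-> | [[Ks Hst] | [Ht' _]]].
  - exfalso; apply (LevH_ord H t Hs); auto.
  - exfalso. pose proof Ht as [HK [_ Htm]]. apply (LevH_ord K t Ht).
    apply (HC_sub_s K t HK Htm s Ks); auto.
  - auto.
Qed.

Lemma level_ord : forall s, level s -> ~ mem s s.
Proof. intros s Hs. destruct (level_LevH s Hs) as [H HL]. apply (LevH_ord H s HL). Qed.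

Lemma level_mem_sub : forall s t, level s -> level t -> mem t s -> sub t s.
Proof.
  intros s t Hs Ht Hts. destruct (level_LevH s Hs) as [H HL]. destruct (level_LevH t Ht) as [K KL].
  pose proof (LevH_mem H K s t HL KL Hts) as Htt.
  destruct HL as [HH [_ Hsm]]. apply (HC_sub_s H s HH Hsm t Htt).
Qed.

Lemma level_tri : forall s t, level s -> level t -> mem s t \/ s = t \/ mem t s.
Proof.
  intros s t Hs Ht. destruct (level_LevH s Hs) as [H HL]. destruct (level_LevH t Ht) as [K KL].
  destruct (LevH_cmp H K s t HL KL) as [-> | [[_ Hst] | [_ Hts]]]; auto.
Qed.

Lemma level_trans : forall s t u, level s -> level t -> level u -> mem s t -> mem t u -> mem s u.
Proof.
  intros s t u Hs Ht Hu Hst Htu. apply (level_mem_sub u t Hu Ht Htu); auto.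
Qed.

Lemma level_wf : forall Q : M -> Prop, (forall x, Q x -> level x) -> (exists x, Q x) ->
  exists m, Q m /\ forall y, Q y -> m = y \/ mem m y.
Proof.
  intros Q HQ [s0 Qs0].
  destruct (level_LevH s0 (HQ s0 Qs0)) as [H0 HL0].
  destruct (classic (exists t, Q t /\ mem t s0)) as [[t [Qt Hts]] | Hno].
  - destruct (HC_wf H0 (proj1 HL0) (fun t => Q t /\ mem t s0)) as [m [[Qm Hms] Hmin]].
    + intros x [Qx Hx]. destruct (level_LevH x (HQ x Qx)) as [K KL].
      apply (LevH_mem H0 K s0 x HL0 KL Hx).
    + exists t; auto.
    + exists m. split; auto. intros y Qy.
      destruct (level_tri m y (HQ m Qm) (HQ y Qy)) as [|[|Hym]]; auto.
      exfalso. apply (Hmin y); auto. split; auto.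
      apply (level_trans y m s0); auto.
  - exists s0. split; auto. intros y Qy.
    destruct (level_tri s0 y (HQ s0 Qs0) (HQ y Qy)) as [|[|Hys]]; auto.
    exfalso; apply Hno; eauto.
Qed.

Theorem part1 : well_ordered_on level mem.
Proof.
  split; [|split; [|split]].
  - intros x y z Hx Hy Hz; apply level_trans; auto.
  - intros x Hx; apply level_ord; auto.
  - intros x y Hx Hy; apply level_tri; auto.
  - intros Q HQ HE. destruct (level_wf Q HQ HE) as [m [Qm Hm]]. exists m; auto.
Qed.

Lemma lev_below : forall s, level s ->
  HC (fun t => level t /\ mem t s) /\ forall y, mem y s <-> bp (fun t => level t /\ mem t s) y.
Proof.
  intros s Hs. destruct (level_LevH s Hs) as [H HL].
  assert (E : forall t, H t <-> (level t /\ mem t s)).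
  { intros t. split.
    - intros Ht. split. apply (HC_elem_level H t (proj1 HL) Ht).
      apply (proj2 (proj2 HL)). apply HC_self; auto. apply HL.
    - intros [Ht Hts]. destruct (level_LevH t Ht) as [K KL]. apply (LevH_mem H K s t HL KL Hts). }
  split.
  - apply (HC_equiv H); auto. apply HL.
  - intros y. rewrite (proj2 (proj2 HL) y). apply bp_ext; intros c _; auto.
Qed.

Lemma ord_sub : forall c x, ~ mem c c -> sub x c -> ~ mem x x.
Proof.
  intros c x Hc Hxc Hxx.
  destruct (strat c Hc) as [s0 [Hs0 Hcs0]].
  destruct (level_wf (fun s => level s /\ mem x s)) as [s [[Hs Hxs] Hmin]].
  - tauto.
  - exists s0; split; auto.
  - destruct (level_LevH s Hs) as [H [HH [_ Hsm]]].
    apply Hsm in Hxs. destruct Hxs as [d [Hd [Hdo [Hxd | Hxd]]]].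
    + assert (Hdl : level d) by (apply (HC_elem_level H); auto).
      assert (Hds : mem d s) by (apply Hsm, HC_self; auto).
      destruct (Hmin d) as [-> | Hsd].
      * split; auto.
      * apply (level_ord d Hdl); auto.
      * apply (level_ord s Hs). apply (level_trans s d s); auto.
    + assert (Hss0 : sub s s0).
      { destruct (Hmin s0) as [-> | Hss0]; [split; auto| intros z; auto |].
        apply level_mem_sub; auto. }
      assert (Hdss : sub d s) by (apply (HC_sub_s H s HH Hsm); auto).
      apply (russell s0 (level_ord s0 Hs0)). intros y.
      destruct (classic (mem y x)) as [Hy | Hy].
      * apply Hcs0, Hxc; auto.
      * apply Hss0, Hdss, Hxd; auto.
Qed.

Lemma csub_nord : forall c x, ~ mem c c -> csub x c -> mem x x.
Proof.
  intros c x Hc Hxc. destruct (compl x) as [d [Hd Hdd]].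
  assert (Hdo : ~ mem d d).
  { apply (ord_sub c d Hc). intros y Hy. apply Hxc. apply Hd; auto. }
  apply NNPP; intro Hx. apply Hdo. apply Hdd; auto.
Qed.

Lemma compl_ord : forall x d, (forall y, mem y d <-> ~ mem y x) -> (~ mem x x <-> mem d d).
Proof.
  intros x d Hd. destruct (compl x) as [d' [Hd' Hdd']].
  assert (d = d') by (apply ext; intros y; rewrite Hd, Hd'; tauto). subst d'. auto.
Qed.

Lemma least_exists : forall x, ~ mem x x -> exists b, least_level_over M mem x b.
Proof.
  intros x Hx. destruct (strat x Hx) as [s [Hs Hxs]].
  destruct (level_wf (fun b => level b /\ sub x b)) as [m [[Hm Hxm] Hmin]].
  - tauto.
  - exists s; auto.
  - exists m. split; auto. split; auto. intros b' Hb' Hxb'.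
    destruct (Hmin b') as [-> | ]; auto.
Qed.

Lemma least_unique : forall x b b', least_level_over M mem x b -> least_level_over M mem x b' -> b = b'.
Proof.
  intros x b b' [Hb [Hxb Hminb]] [Hb' [Hxb' Hminb']].
  destruct (Hminb b' Hb' Hxb') as [-> | H1]; auto.
  destruct (Hminb' b Hb Hxb) as [-> | H2]; auto.
  exfalso. apply (level_ord b Hb). apply (level_trans b b' b); auto.
Qed.

Lemma isB_exists : forall x, exists b, is_B M mem x b.
Proof.
  intros x. destruct (classic (mem x x)) as [Hx | Hx].
  - destruct (compl x) as [c [Hc Hcc]].
    assert (Hco : ~ mem c c) by (intro Hc'; apply Hcc in Hc'; auto).
    destruct (least_exists c Hco) as [b Hb]. exists b. right. split; auto. exists c; auto.
  - destruct (least_exists x Hx) as [b Hb]. exists b. left; auto.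
Qed.

End Internal.


Definition Phi {M1 M2 : Type} (mem1 : M1 -> M1 -> Prop) (mem2 : M2 -> M2 -> Prop)
  (R : M1 -> M2 -> Prop) (x : M1) (y : M2) : Prop :=
  (~ mem1 x x /\ ~ mem2 y y /\ (forall u, mem1 u x -> exists v, mem2 v y /\ R u v) /\
     (forall v, mem2 v y -> exists u, mem1 u x /\ R u v)) \/
  (mem1 x x /\ mem2 y y /\ exists x' y', (forall z, mem1 z x' <-> ~ mem1 z x) /\
     (forall z, mem2 z y' <-> ~ mem2 z y) /\ R x' y').

Definition Ebis {M1 M2 : Type} (mem1 : M1 -> M1 -> Prop) (mem2 : M2 -> M2 -> Prop) (x : M1) (y : M2) : Prop :=
  forall R : M1 -> M2 -> Prop, (forall a b, Phi mem1 mem2 R a b -> R a b) -> R x y.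

Section SecA.
Variables (M1 M2 : Type) (mem1 : M1 -> M1 -> Prop) (mem2 : M2 -> M2 -> Prop).
Hypotheses (HB1 : BLT M1 mem1) (HB2 : BLT M2 mem2).
Notation E := (Ebis mem1 mem2).

Lemma Phi_mono : forall (R S : M1 -> M2 -> Prop), (forall a b, R a b -> S a b) ->
  forall x y, Phi mem1 mem2 R x y -> Phi mem1 mem2 S x y.
Proof.
  intros R S HRS x y [[H1 [H2 [H3 H4]]] | [H1 [H2 [x' [y' [H3 [H4 H5]]]]]]].
  - left. repeat split; auto.
    + intros u Hu. destruct (H3 u Hu) as [v [Hv Hr]]; eauto.
    + intros v Hv. destruct (H4 v Hv) as [u [Hu Hr]]; eauto.
  - right. repeat split; auto. exists x', y'; auto.
Qed.

Lemma E_fold : forall x y, Phi mem1 mem2 E x y -> E x y.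
Proof.
  intros x y HP R HR. apply HR. revert HP. apply Phi_mono. intros a b Hab. apply Hab, HR.
Qed.

Lemma E_unfold : forall x y, E x y -> Phi mem1 mem2 E x y.
Proof.
  intros x y HE. apply (HE (Phi mem1 mem2 E)). intros a b Hab.
  revert Hab. apply Phi_mono. intros u v. apply E_fold.
Qed.

Lemma E_ind : forall P : M1 -> M2 -> Prop,
  (forall a b, Phi mem1 mem2 (fun u v => E u v /\ P u v) a b -> P a b) ->
  forall x y, E x y -> P x y.
Proof.
  intros P IH x y HE.
  enough (E x y /\ P x y) by tauto.
  apply (HE (fun u v => E u v /\ P u v)). intros a b Hab. split.
  - apply E_fold. revert Hab. apply Phi_mono. tauto.
  - apply IH; auto.
Qed.

Lemma E_sym : forall x y, E x y -> Ebis mem2 mem1 y x.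
Proof.
  apply (E_ind (fun x y => Ebis mem2 mem1 y x)).
  intros a b [[H1 [H2 [H3 H4]]] | [H1 [H2 [x' [y' [H3 [H4 H5]]]]]]] R HR; apply HR.
  - left. repeat split; auto.
    + intros v Hv. destruct (H4 v Hv) as [u [Hu [_ Hr]]]. exists u; split; auto. exact (Hr R HR).
    + intros u Hu. destruct (H3 u Hu) as [v [Hv [_ Hr]]]. exists v; split; auto. exact (Hr R HR).
  - right. repeat split; auto. exists y', x'. split; [exact H4|split; [exact H3| exact (proj2 H5 R HR)]].
Qed.

Lemma E_func : forall x y y', E x y -> E x y' -> y = y'.
Proof.
  intros x y y' HE. revert y'. revert x y HE.
  apply (E_ind (fun x y => forall y', E x y' -> y = y')).
  intros a b [[H1 [H2 [H3 H4]]] | [H1 [H2 [x' [y' [H3 [H4 [_ H5]]]]]]]] b' Hb'.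
  - apply E_unfold in Hb'. destruct Hb' as [[_ [H2' [H3' H4']]] | [Hc _]]; [|contradiction].
    apply (ext M2 mem2 HB2). intros v. split.
    + intros Hv. destruct (H4 v Hv) as [u [Hu [_ Huv]]].
      destruct (H3' u Hu) as [v' [Hv' Huv']]. rewrite (Huv v' Huv'); auto.
    + intros Hv. destruct (H4' v Hv) as [u [Hu Huv]].
      destruct (H3 u Hu) as [v' [Hv' [_ Huv']]]. rewrite <- (Huv' v Huv); auto.
  - apply E_unfold in Hb'. destruct Hb' as [[Hc _] | [_ [H2' [x'' [y'' [H3' [H4' H5']]]]]]]; [contradiction|].
    assert (x'' = x') by (apply (ext M1 mem1 HB1); intros z; rewrite H3, H3'; tauto). subst x''.
    pose proof (H5 y'' H5') as Hyy. subst y''.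
    apply (ext M2 mem2 HB2). intros z. split; intros Hz.
    + apply NNPP; intro Hn. apply H4' in Hn. apply H4 in Hn. auto.
    + apply NNPP; intro Hn. apply H4 in Hn. apply H4' in Hn. auto.
Qed.

Lemma E_ord : forall x y, E x y -> (mem1 x x <-> mem2 y y).
Proof.
  intros x y HE. apply E_unfold in HE. destruct HE as [[H1 [H2 _]] | [H1 [H2 _]]]; tauto.
Qed.

End SecA.

Definition corrF {M1 M2 : Type} (mem1 : M1 -> M1 -> Prop) (mem2 : M2 -> M2 -> Prop)
  (A1 : M1 -> Prop) (A2 : M2 -> Prop) :=
  forall c1, A1 c1 -> ~ mem1 c1 c1 -> exists c2, A2 c2 /\ Ebis mem1 mem2 c1 c2.
Definition corrB {M1 M2 : Type} (mem1 : M1 -> M1 -> Prop) (mem2 : M2 -> M2 -> Prop)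
  (A1 : M1 -> Prop) (A2 : M2 -> Prop) :=
  forall c2, A2 c2 -> ~ mem2 c2 c2 -> exists c1, A1 c1 /\ Ebis mem1 mem2 c1 c2.

Section SecB.
Variables (M1 M2 : Type) (mem1 : M1 -> M1 -> Prop) (mem2 : M2 -> M2 -> Prop).
Hypotheses (HB1 : BLT M1 mem1) (HB2 : BLT M2 mem2).
Notation E := (Ebis mem1 mem2).

Lemma E_inj : forall x x' y, E x y -> E x' y -> x = x'.
Proof.
  intros x x' y H1 H2. apply (E_func M2 M1 mem2 mem1 HB2 HB1 y x x');
  apply E_sym; auto.
Qed.

Lemma E_elems : forall x y, E x y -> ~ mem1 x x ->
  (forall u, mem1 u x -> exists v, mem2 v y /\ E u v) /\
  (forall v, mem2 v y -> exists u, mem1 u x /\ E u v).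
Proof.
  intros x y HE Hx. apply (E_unfold M1 M2 mem1 mem2) in HE.
  destruct HE as [[_ [_ [H3 H4]]] | [Hc _]]; [split; auto | contradiction].
Qed.

Lemma E_co : forall x y, E x y -> mem1 x x ->
  exists x' y', (forall z, mem1 z x' <-> ~ mem1 z x) /\
     (forall z, mem2 z y' <-> ~ mem2 z y) /\ E x' y'.
Proof.
  intros x y HE Hx. apply (E_unfold M1 M2 mem1 mem2) in HE.
  destruct HE as [[Hc _] | [_ [_ H]]]; [contradiction | auto].
Qed.

Lemma mem_pres_ord : forall x y u v, E x y -> ~ mem1 x x -> E u v -> (mem1 u x <-> mem2 v y).
Proof.
  intros x y u v Hxy Hx Huv. destruct (E_elems x y Hxy Hx) as [H3 H4]. split.
  - intros Hu. destruct (H3 u Hu) as [v' [Hv' Huv']].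
    rewrite (E_func M1 M2 mem1 mem2 HB1 HB2 u v v'); auto.
  - intros Hv. destruct (H4 v Hv) as [u' [Hu' Huv']].
    rewrite (E_inj u u' v); auto.
Qed.

Lemma mem_pres : forall x y u v, E x y -> E u v -> (mem1 u x <-> mem2 v y).
Proof.
  intros x y u v Hxy Huv. destruct (classic (mem1 x x)) as [Hx | Hx].
  - destruct (E_co x y Hxy Hx) as [x' [y' [H3 [H4 H5]]]].
    assert (Hx' : ~ mem1 x' x') by (intro Hc; apply (compl_ord M1 mem1 HB1 x x' H3) in Hc; auto).
    pose proof (mem_pres_ord x' y' u v H5 Hx' Huv) as Hm.
    split; intros Hm'.
    + apply NNPP; intro Hn. apply H4 in Hn. apply Hm in Hn. apply H3 in Hn; auto.
    + apply NNPP; intro Hn. apply H3 in Hn. apply Hm in Hn. apply H4 in Hn; auto.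
  - apply mem_pres_ord; auto.
Qed.

Lemma range_sub : forall c1 c2 y, E c1 c2 -> ~ mem1 c1 c1 -> subsetM M2 mem2 y c2 ->
  exists x, E x y /\ subsetM M1 mem1 x c1.
Proof.
  intros c1 c2 y Hc Hc1 Hy.
  destruct (sep M1 mem1 HB1 (fun u => exists v, mem2 v y /\ E u v) c1 Hc1) as [x [Hx Hxm]].
  exists x. split.
  - apply E_fold. left. split; auto. split.
    + apply (ord_sub M2 mem2 HB2 c2 y); auto. intro Hc2. apply (E_ord M1 M2 mem1 mem2 c1 c2 Hc) in Hc2; auto.
    + split.
      * intros u Hu. apply Hxm in Hu. destruct Hu as [[v [Hv Huv]] _]. eauto.
      * intros v Hv. destruct (E_elems c1 c2 Hc Hc1) as [_ H4].
        destruct (H4 v (Hy v Hv)) as [u [Hu Huv]]. exists u. split; auto.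
        apply Hxm. split; eauto.
  - intros u Hu. apply Hxm in Hu. tauto.
Qed.

Lemma range_csub : forall c1 c2 y, E c1 c2 -> ~ mem1 c1 c1 -> csubsetM M2 mem2 y c2 ->
  exists x, E x y /\ csubsetM M1 mem1 x c1.
Proof.
  intros c1 c2 y Hc Hc1 Hy.
  destruct (compl M2 mem2 HB2 y) as [y' [Hy' Hyy']].
  destruct (range_sub c1 c2 y' Hc Hc1) as [x' [Hx' Hx'c]].
  { intros z Hz. apply Hy. apply Hy'; auto. }
  destruct (compl M1 mem1 HB1 x') as [x [Hx Hxx]].
  exists x. split.
  - apply E_fold. right. split; [|split].
    + apply Hxx. apply (ord_sub M1 mem1 HB1 c1 x'); auto.
    + apply (csub_nord M2 mem2 HB2 c2 y); auto. intro Hc2.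
      apply (E_ord M1 M2 mem1 mem2 c1 c2 Hc) in Hc2; auto.
    + exists x', y'. split; [|split; auto].
      intros z; rewrite Hx; split; [intros H H'; contradiction | apply NNPP].
  - intros z Hz. apply Hx'c. apply NNPP; intro Hn. apply Hz. apply Hx; auto.
Qed.

Lemma transfer : forall A1 A2 x y, corrF mem1 mem2 A1 A2 -> E x y ->
  in_bpot M1 mem1 A1 x -> in_bpot M2 mem2 A2 y.
Proof.
  intros A1 A2 x y Hc Hxy [c1 [HA1 [Hc1 Hs]]].
  destruct (Hc c1 HA1 Hc1) as [c2 [HA2 Hc12]].
  exists c2. split; auto. split.
  - intro H. apply (E_ord M1 M2 mem1 mem2 c1 c2 Hc12) in H; auto.
  - destruct Hs as [Hs | Hs].
    + left. assert (Hx : ~ mem1 x x) by (apply (ord_sub M1 mem1 HB1 c1 x); auto).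
      intros v Hv. destruct (E_elems x y Hxy Hx) as [_ H4]. destruct (H4 v Hv) as [u [Hu Huv]].
      apply (mem_pres c1 c2 u v); auto.
    + right. assert (Hx : mem1 x x) by (apply (csub_nord M1 mem1 HB1 c1 x); auto).
      destruct (E_co x y Hxy Hx) as [x' [y' [H3 [H4 H5]]]].
      assert (Hx' : ~ mem1 x' x') by (intro Hc'; apply (compl_ord M1 mem1 HB1 x x' H3) in Hc'; auto).
      intros v Hv. apply H4 in Hv. destruct (E_elems x' y' H5 Hx') as [_ H6].
      destruct (H6 v Hv) as [u [Hu Huv]]. apply (mem_pres c1 c2 u v); auto.
      apply Hs. apply H3; auto.
Qed.

Lemma bp_range : forall A1 A2 v, corrB mem1 mem2 A1 A2 ->
  in_bpot M2 mem2 A2 v -> exists u, E u v.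
Proof.
  intros A1 A2 v Hc [c2 [HA2 [Hc2 Hs]]].
  destruct (Hc c2 HA2 Hc2) as [c1 [HA1 Hc12]].
  assert (Hc1 : ~ mem1 c1 c1).
  { intro H. apply (E_ord M1 M2 mem1 mem2 c1 c2 Hc12) in H; auto. }
  destruct Hs as [Hs | Hs].
  - destruct (range_sub c1 c2 v Hc12 Hc1 Hs) as [u [Hu _]]; eauto.
  - destruct (range_csub c1 c2 v Hc12 Hc1 Hs) as [u [Hu _]]; eauto.
Qed.

End SecB.

Section SecC.
Variables (M1 M2 : Type) (mem1 : M1 -> M1 -> Prop) (mem2 : M2 -> M2 -> Prop).
Hypotheses (HB1 : BLT M1 mem1) (HB2 : BLT M2 mem2).
Notation E := (Ebis mem1 mem2).

Lemma E_sym' : forall x y, Ebis mem2 mem1 y x -> E x y.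
Proof. intros x y H. apply (E_sym M2 M1 mem2 mem1); auto. Qed.

Lemma E_ord' : forall x y, E x y -> (~ mem1 x x <-> ~ mem2 y y).
Proof. intros x y H. pose proof (E_ord M1 M2 mem1 mem2 x y H). tauto. Qed.

Lemma dom_sub : forall c1 c2 x, E c1 c2 -> ~ mem1 c1 c1 -> subsetM M1 mem1 x c1 ->
  exists y, E x y /\ subsetM M2 mem2 y c2.
Proof.
  intros c1 c2 x Hc Hc1 Hx.
  destruct (range_sub M2 M1 mem2 mem1 HB2 HB1 c2 c1 x) as [y [Hy Hyc]]; auto.
  - apply E_sym; auto.
  - apply (E_ord' c1 c2); auto.
  - exists y; split; auto. apply E_sym'; auto.
Qed.

Lemma dom_csub : forall c1 c2 x, E c1 c2 -> ~ mem1 c1 c1 -> csubsetM M1 mem1 x c1 ->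
  exists y, E x y /\ csubsetM M2 mem2 y c2.
Proof.
  intros c1 c2 x Hc Hc1 Hx.
  destruct (range_csub M2 M1 mem2 mem1 HB2 HB1 c2 c1 x) as [y [Hy Hyc]]; auto.
  - apply E_sym; auto.
  - apply (E_ord' c1 c2); auto.
  - exists y; split; auto. apply E_sym'; auto.
Qed.

Lemma transfer_bwd : forall A1 A2 x y, corrB mem1 mem2 A1 A2 -> E x y ->
  in_bpot M2 mem2 A2 y -> in_bpot M1 mem1 A1 x.
Proof.
  intros A1 A2 x y Hc Hxy Hy.
  apply (transfer M2 M1 mem2 mem1 HB2 HB1 A2 A1 y x); auto.
  - intros c2 HA2 Hc2. destruct (Hc c2 HA2 Hc2) as [c1 [HA1 H]]. exists c1; split; auto.
    apply E_sym; auto.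
  - apply E_sym; auto.
Qed.

Lemma bp_dom : forall A1 A2 u, corrF mem1 mem2 A1 A2 ->
  in_bpot M1 mem1 A1 u -> exists v, E u v.
Proof.
  intros A1 A2 u Hc Hu.
  destruct (bp_range M2 M1 mem2 mem1 HB2 HB1 A2 A1 u) as [v Hv]; auto.
  - intros c1 HA1 Hc1. destruct (Hc c1 HA1 Hc1) as [c2 [HA2 H]]. exists c2; split; auto.
    apply E_sym; auto.
  - exists v; apply E_sym'; auto.
Qed.

Lemma bp_image : forall A1 A2 x y, corrF mem1 mem2 A1 A2 -> corrB mem1 mem2 A1 A2 ->
  E x y -> ~ mem1 x x -> (forall u, mem1 u x <-> in_bpot M1 mem1 A1 u) ->
  (forall v, mem2 v y <-> in_bpot M2 mem2 A2 v).
Proof.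
  intros A1 A2 x y HF HB Hxy Hx Hxm v. split.
  - intros Hv. destruct (E_elems M1 M2 mem1 mem2 x y Hxy Hx) as [_ H4].
    destruct (H4 v Hv) as [u [Hu Huv]]. apply (transfer M1 M2 mem1 mem2 HB1 HB2 A1 A2 u v); auto.
    apply Hxm; auto.
  - intros Hv. destruct (bp_range M1 M2 mem1 mem2 HB1 HB2 A1 A2 v HB Hv) as [u Huv].
    apply (mem_pres M1 M2 mem1 mem2 HB1 HB2 x y u v); auto.
    apply Hxm. apply (transfer_bwd A1 A2 u v); auto.
Qed.

Lemma fold_bp : forall A1 A2 s1 s2, corrF mem1 mem2 A1 A2 -> corrB mem1 mem2 A1 A2 ->
  ~ mem1 s1 s1 -> ~ mem2 s2 s2 ->
  (forall u, mem1 u s1 <-> in_bpot M1 mem1 A1 u) ->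
  (forall v, mem2 v s2 <-> in_bpot M2 mem2 A2 v) -> E s1 s2.
Proof.
  intros A1 A2 s1 s2 HF HB Hs1 Hs2 H1 H2. apply E_fold. left. split; auto. split; auto. split.
  - intros u Hu. apply H1 in Hu. destruct (bp_dom A1 A2 u HF Hu) as [v Hv].
    exists v. split; auto. apply H2. apply (transfer M1 M2 mem1 mem2 HB1 HB2 A1 A2 u v); auto.
  - intros v Hv. apply H2 in Hv. destruct (bp_range M1 M2 mem1 mem2 HB1 HB2 A1 A2 v HB Hv) as [u Hu].
    exists u. split; auto. apply H1. apply (transfer_bwd A1 A2 u v); auto.
Qed.

Lemma level_pres : forall s1 s2, E s1 s2 -> is_blevel M1 mem1 s1 -> is_blevel M2 mem2 s2.
Proof.
  intros s1 s2 Hs Hl. apply NNPP; intro Hbad.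
  destruct (level_wf M1 mem1 HB1 (fun s => is_blevel M1 mem1 s /\ exists s2, E s s2 /\ ~ is_blevel M2 mem2 s2))
    as [t [[Ht [t2 [Htt2 Ht2]]] Hmin]]; [tauto | eauto |].
  apply Ht2. clear s1 s2 Hs Hl Hbad.
  destruct (lev_below M1 mem1 HB1 t Ht) as [HH1 Htm].
  set (H1 := fun c => is_blevel M1 mem1 c /\ mem1 c t) in *.
  set (H2 := fun v => exists c, H1 c /\ E c v).
  assert (IH : forall c v, H1 c -> E c v -> is_blevel M2 mem2 v).
  { intros c v [Hc Hct] Hcv. apply NNPP; intro Hn.
    destruct (Hmin c) as [-> | Htc]; [split; eauto | |].
    - apply (level_ord M1 mem1 HB1 c Hc); auto.
    - apply (level_ord M1 mem1 HB1 c Hc). apply (level_trans M1 mem1 HB1 c t c); auto. }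
  assert (Hto : ~ mem1 t t) by (apply level_ord; auto).
  assert (HC2 : HC M2 mem2 H2).
  { split.
    - intros v [c [Hc Hcv]]. apply (E_ord' c v Hcv). apply (HC_ord M1 mem1 H1 HH1 c Hc).
    - intros v [c [Hc Hcv]].
      assert (Hco : ~ mem1 c c) by (apply (HC_ord M1 mem1 H1 HH1 c Hc)).
      apply (bp_image (fun d => mem1 d c /\ H1 d) (fun d => mem2 d v /\ H2 d) c v); auto.
      + intros d [Hdc Hd] Hdo. destruct (E_elems M1 M2 mem1 mem2 c v Hcv Hco) as [H3 _].
        destruct (H3 d Hdc) as [d2 [Hd2 Hdd2]]. exists d2. split; auto. split; auto. exists d; auto.
      + intros d2 [Hd2v [d [Hd Hdd2]]] Hd2o. exists d. split; auto. split; auto.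
        apply (mem_pres M1 M2 mem1 mem2 HB1 HB2 c v d d2); auto.
      + apply (HC_mem M1 mem1 H1 HH1 c Hc). }
  apply (mk_level M2 mem2 HB2 H2); auto.
  - apply (E_ord' t t2); auto.
  - apply (bp_image H1 H2 t t2); auto.
    + intros d Hd Hdo. destruct (E_elems M1 M2 mem1 mem2 t t2 Htt2 Hto) as [H3 _].
      destruct (H3 d (proj2 Hd)) as [d2 [Hd2 Hdd2]]. exists d2. split; auto. exists d; auto.
    + intros d2 [d [Hd Hdd2]] _. exists d; auto.
Qed.

End SecC.

Section SecD.
Variables (M1 M2 : Type) (mem1 : M1 -> M1 -> Prop) (mem2 : M2 -> M2 -> Prop).
Hypotheses (HB1 : BLT M1 mem1) (HB2 : BLT M2 mem2).
Notation E := (Ebis mem1 mem2).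

Lemma level_pres' : forall s1 s2, E s1 s2 -> is_blevel M2 mem2 s2 -> is_blevel M1 mem1 s1.
Proof.
  intros s1 s2 H Hl. apply (level_pres M2 M1 mem2 mem1 HB2 HB1 s2 s1); auto. apply E_sym; auto.
Qed.

Lemma dichotomy : (forall s1, is_blevel M1 mem1 s1 -> exists s2, E s1 s2) \/
                  (forall s2, is_blevel M2 mem2 s2 -> exists s1, E s1 s2).
Proof.
  apply NNPP; intro Hn. apply not_or_and in Hn. destruct Hn as [Hn1 Hn2].
  destruct (level_wf M1 mem1 HB1 (fun s => is_blevel M1 mem1 s /\ ~ exists s2, E s s2))
    as [s1 [[Hs1 Js1] Hmin1]].
  { tauto. }
  { apply NNPP; intro Hc. apply Hn1. intros s Hs. apply NNPP; intro Hj. apply Hc; eauto. }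
  destruct (level_wf M2 mem2 HB2 (fun s => is_blevel M2 mem2 s /\ ~ exists s1, E s1 s))
    as [s2 [[Hs2 Js2] Hmin2]].
  { tauto. }
  { apply NNPP; intro Hc. apply Hn2. intros s Hs. apply NNPP; intro Hj. apply Hc; eauto. }
  destruct (lev_below M1 mem1 HB1 s1 Hs1) as [HH1 Hs1m].
  destruct (lev_below M2 mem2 HB2 s2 Hs2) as [HH2 Hs2m].
  apply Js1. exists s2.
  apply (fold_bp M1 M2 mem1 mem2 HB1 HB2 (fun t => is_blevel M1 mem1 t /\ mem1 t s1)
           (fun t => is_blevel M2 mem2 t /\ mem2 t s2)); auto.
  - intros t [Ht Hts] _.
    assert (Jt : exists t2, E t t2).
    { apply NNPP; intro Hj. destruct (Hmin1 t) as [-> | Hst]; [split; auto | |].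
      - apply (level_ord M1 mem1 HB1 t Ht); auto.
      - apply (level_ord M1 mem1 HB1 t Ht). apply (level_trans M1 mem1 HB1 t s1 t); auto. }
    destruct Jt as [t2 Htt2]. exists t2.
    assert (Ht2 : is_blevel M2 mem2 t2) by (apply (level_pres M1 M2 mem1 mem2 HB1 HB2 t); auto).
    split; auto.
    destruct (level_tri M2 mem2 HB2 t2 s2 Ht2 Hs2) as [| [-> | Hst]]; auto.
    + exfalso; apply Js2; eauto.
    + exfalso. apply Js2.
      destruct (E_elems M1 M2 mem1 mem2 t t2 Htt2 (level_ord M1 mem1 HB1 t Ht)) as [_ H4].
      destruct (H4 s2 Hst) as [u [_ Hu]]; eauto.
  - intros t2 [Ht2 Hts] _.
    assert (Jt : exists t, E t t2).
    { apply NNPP; intro Hj. destruct (Hmin2 t2) as [-> | Hst]; [split; auto | |].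
      - apply (level_ord M2 mem2 HB2 t2 Ht2); auto.
      - apply (level_ord M2 mem2 HB2 t2 Ht2). apply (level_trans M2 mem2 HB2 t2 s2 t2); auto. }
    destruct Jt as [t Htt2]. exists t.
    assert (Ht : is_blevel M1 mem1 t) by (apply (level_pres' t t2); auto).
    split; auto.
    destruct (level_tri M1 mem1 HB1 t s1 Ht Hs1) as [| [-> | Hst]]; auto.
    + exfalso; apply Js1; eauto.
    + exfalso. apply Js1.
      destruct (E_elems M1 M2 mem1 mem2 t t2 Htt2 (level_ord M1 mem1 HB1 t Ht)) as [H3 _].
      destruct (H3 s1 Hst) as [v [_ Hv]]; eauto.
  - apply level_ord; auto.
  - apply level_ord; auto.
Qed.

Lemma dom_total : (forall s1, is_blevel M1 mem1 s1 -> exists s2, E s1 s2) -> forall x, exists y, E x y.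
Proof.
  intros HJ x. destruct (classic (mem1 x x)) as [Hx | Hx].
  - destruct (compl M1 mem1 HB1 x) as [x' [Hx' Hxx']].
    assert (Ho : ~ mem1 x' x') by (intro H; apply Hxx' in H; auto).
    destruct (strat M1 mem1 HB1 x' Ho) as [s [Hs Hxs]].
    destruct (HJ s Hs) as [s2 Hss2].
    destruct (dom_csub M1 M2 mem1 mem2 HB1 HB2 s s2 x Hss2 (level_ord M1 mem1 HB1 s Hs)) as [y [Hy _]]; eauto.
    intros z Hz. apply Hxs. apply Hx'; auto.
  - destruct (strat M1 mem1 HB1 x Hx) as [s [Hs Hxs]].
    destruct (HJ s Hs) as [s2 Hss2].
    destruct (dom_sub M1 M2 mem1 mem2 HB1 HB2 s s2 x Hss2 (level_ord M1 mem1 HB1 s Hs)) as [y [Hy _]]; eauto.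
Qed.

End SecD.

Section SecE.
Variables (M1 M2 : Type) (mem1 : M1 -> M1 -> Prop) (mem2 : M2 -> M2 -> Prop).
Hypotheses (HB1 : BLT M1 mem1) (HB2 : BLT M2 mem2).
Notation E := (Ebis mem1 mem2).

Lemma ran_total : (forall s2, is_blevel M2 mem2 s2 -> exists s1, E s1 s2) -> forall y, exists x, E x y.
Proof.
  intros HJ y.
  destruct (dom_total M2 M1 mem2 mem1 HB2 HB1) with (x := y) as [x Hx].
  - intros s2 Hs2. destruct (HJ s2 Hs2) as [s1 H]. exists s1. apply E_sym; auto.
  - exists x. apply (E_sym' M1 M2 mem1 mem2); auto.
Qed.

Lemma embed : (forall s1, is_blevel M1 mem1 s1 -> exists s2, E s1 s2) -> initial_segment mem1 mem2.
Proof.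
  intros HJ.
  pose proof (dom_total M1 M2 mem1 mem2 HB1 HB2 HJ) as Hdom.
  set (f := fun x => proj1_sig (constructive_indefinite_description _ (Hdom x))).
  assert (Hf : forall x, E x (f x)) by (intros x; apply (proj2_sig (constructive_indefinite_description _ (Hdom x)))).
  assert (finj : forall a1 a2, f a1 = f a2 -> a1 = a2).
  { intros a1 a2 H. apply (E_inj M1 M2 mem1 mem2 HB1 HB2 a1 a2 (f a1)); auto. rewrite H; auto. }
  assert (fmem : forall a1 a2, mem1 a1 a2 <-> mem2 (f a1) (f a2)).
  { intros a1 a2. apply (mem_pres M1 M2 mem1 mem2 HB1 HB2); auto. }
  assert (fsurj : forall y, (exists x, E x y) -> exists a, f a = y).
  { intros y [x Hx]. exists x. apply (E_func M1 M2 mem1 mem2 HB1 HB2 x); auto. }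
  destruct (classic (forall s2, is_blevel M2 mem2 s2 -> exists s1, E s1 s2)) as [HJ2 | HJ2].
  - left. exists f. split; [auto|]. split; [auto|]. split; [|auto].
    intros y _. apply fsurj. apply ran_total; auto.
  - right.
    destruct (level_wf M2 mem2 HB2 (fun s => is_blevel M2 mem2 s /\ ~ exists s1, E s1 s))
      as [st [[Hst Jst] Hmin]].
    { tauto. }
    { apply NNPP; intro Hc. apply HJ2. intros s Hs. apply NNPP; intro Hj. apply Hc; eauto. }
    assert (Jiff1 : forall b2, is_blevel M2 mem2 b2 -> (exists b1, E b1 b2) -> mem2 b2 st).
    { intros b2 Hb2 [b1 Hb12].
      assert (Hb1 : is_blevel M1 mem1 b1) by (apply (level_pres' M1 M2 mem1 mem2 HB1 HB2 b1 b2); auto).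
      destruct (level_tri M2 mem2 HB2 b2 st Hb2 Hst) as [| [-> | Hsb]]; auto.
      - exfalso; apply Jst; eauto.
      - exfalso. apply Jst.
        destruct (E_elems M1 M2 mem1 mem2 b1 b2 Hb12 (level_ord M1 mem1 HB1 b1 Hb1)) as [_ H4].
        destruct (H4 st Hsb) as [u [_ Hu]]; eauto. }
    assert (Jiff2 : forall b2, is_blevel M2 mem2 b2 -> mem2 b2 st -> exists b1, E b1 b2).
    { intros b2 Hb2 Hbs. apply NNPP; intro Hj. destruct (Hmin b2) as [-> | Hsb]; [split; auto| |].
      - apply (level_ord M2 mem2 HB2 b2 Hb2); auto.
      - apply (level_ord M2 mem2 HB2 b2 Hb2). apply (level_trans M2 mem2 HB2 b2 st b2); auto. }
    assert (Hord : forall x y, E x y -> ~ mem1 x x ->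
               exists b, least_level_over M2 mem2 y b /\ mem2 b st).
    { intros x y Hxy Hx.
      destruct (least_exists M1 mem1 HB1 x Hx) as [b1 [Hb1 [Hxb1 _]]].
      destruct (HJ b1 Hb1) as [b2 Hb12].
      assert (Hb2 : is_blevel M2 mem2 b2) by (apply (level_pres M1 M2 mem1 mem2 HB1 HB2 b1); auto).
      assert (Hb2s : mem2 b2 st) by (apply Jiff1; eauto).
      assert (Hyb2 : subsetM M2 mem2 y b2).
      { intros v Hv. destruct (E_elems M1 M2 mem1 mem2 x y Hxy Hx) as [_ H4].
        destruct (H4 v Hv) as [u [Hu Huv]].
        apply (mem_pres M1 M2 mem1 mem2 HB1 HB2 b1 b2 u v); auto. }
      assert (Hy : ~ mem2 y y) by (apply (E_ord' M1 M2 mem1 mem2 x y); auto).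
      destruct (least_exists M2 mem2 HB2 y Hy) as [b Hb].
      exists b. split; auto. destruct Hb as [Hbl [_ Hbmin]].
      destruct (Hbmin b2 Hb2 Hyb2) as [-> | Hbb2]; auto.
      apply (level_trans M2 mem2 HB2 b b2 st); auto. }
    exists st. split; auto. exists f. split; [|split; [auto|split; [|auto]]].
    + intros x. destruct (classic (mem1 x x)) as [Hx | Hx].
      * destruct (E_co M1 M2 mem1 mem2 x (f x) (Hf x) Hx) as [x' [y' [H3 [H4 H5]]]].
        assert (Hx' : ~ mem1 x' x') by (intro Hc; apply (compl_ord M1 mem1 HB1 x x' H3) in Hc; auto).
        destruct (Hord x' y' H5 Hx') as [b [Hb Hbs]]. exists b. split; auto.
        right. split.
        -- apply (E_ord M1 M2 mem1 mem2 x (f x) (Hf x)); auto.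
        -- exists y'. split; auto.
      * destruct (Hord x (f x) (Hf x) Hx) as [b [Hb Hbs]]. exists b. split; auto.
        left. split; auto. apply (E_ord' M1 M2 mem1 mem2 x (f x) (Hf x)); auto.
    + intros y [b [HB Hbs]]. apply fsurj.
      destruct HB as [[Hy [Hbl [Hyb _]]] | [Hy [c [Hc [Hbl [Hcb _]]]]]].
      * destruct (Jiff2 b Hbl Hbs) as [a Hab].
        assert (Ha : ~ mem1 a a).
        { apply (level_ord M1 mem1 HB1). apply (level_pres' M1 M2 mem1 mem2 HB1 HB2 a b); auto. }
        destruct (range_sub M1 M2 mem1 mem2 HB1 HB2 a b y Hab Ha Hyb) as [x [Hx _]]; eauto.
      * destruct (Jiff2 b Hbl Hbs) as [a Hab].
        assert (Ha : ~ mem1 a a).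
        { apply (level_ord M1 mem1 HB1). apply (level_pres' M1 M2 mem1 mem2 HB1 HB2 a b); auto. }
        destruct (range_csub M1 M2 mem1 mem2 HB1 HB2 a b y Hab Ha) as [x [Hx _]]; eauto.
        intros z Hz. apply Hcb. apply Hc; auto.
Qed.

End SecE.

Theorem part3 : forall (M1 : Type) (mem1 : M1 -> M1 -> Prop) (M2 : Type) (mem2 : M2 -> M2 -> Prop),
  BLT M1 mem1 -> BLT M2 mem2 -> initial_segment mem1 mem2 \/ initial_segment mem2 mem1.
Proof.
  intros M1 mem1 M2 mem2 HB1 HB2.
  destruct (dichotomy M1 M2 mem1 mem2 HB1 HB2) as [H | H].
  - left. apply embed; auto.
  - right. apply embed; auto. intros s2 Hs2. destruct (H s2 Hs2) as [s1 Hs]. exists s1.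
    apply E_sym; auto.
Qed.


Inductive pre : Type := mk : bool -> forall Ix : Type, (Ix -> pre) -> pre.

Definition sgn (t : pre) : bool := match t with mk s _ _ => s end.
Definition idx (t : pre) : Type := match t with mk _ Ix _ => Ix end.
Definition elt (t : pre) : idx t -> pre := match t with mk _ _ f => f end.
Definition flip (t : pre) : pre := match t with mk s Ix f => mk (negb s) Ix f end.

Fixpoint peq (t u : pre) {struct t} : Prop :=
  match t with
  | mk s Ix f => match u with
    | mk s' J g => s = s' /\ (forall i, exists j, peq (f i) (g j)) /\ (forall j, exists i, peq (f i) (g j))
    end
  end.

Lemma peq_refl : forall t, peq t t.
Proof.
  induction t as [s Ix f IH]. simpl. split; auto. split; intros i; exists i; auto.
Qed.

Lemma peq_sym : forall t u, peq t u -> peq u t.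
Proof.
  induction t as [s Ix f IH]. intros [s' J g] [Hs [H1 H2]]. simpl. split; auto. split.
  - intros j. destruct (H2 j) as [i Hi]. exists i. apply IH; auto.
  - intros i. destruct (H1 i) as [j Hj]. exists j. apply IH; auto.
Qed.

Lemma peq_trans : forall t u v, peq t u -> peq u v -> peq t v.
Proof.
  induction t as [s Ix f IH]. intros [s' J g] [s'' K h] [Hs [H1 H2]] [Hs' [H3 H4]]. simpl.
  split; [congruence|]. split.
  - intros i. destruct (H1 i) as [j Hj]. destruct (H3 j) as [k Hk]. exists k. eauto.
  - intros k. destruct (H4 k) as [j Hj]. destruct (H2 j) as [i Hi]. exists i. eauto.
Qed.

Definition pin (x t : pre) : Prop := exists i : idx t, peq x (elt t i).
Definition memt (x t : pre) : Prop := if sgn t then pin x t else ~ pin x t.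
Definition psub (t u : pre) : Prop := forall y, pin y t -> pin y u.

Lemma pin_resp : forall x x' t t', peq x x' -> peq t t' -> pin x t -> pin x' t'.
Proof.
  intros x x' [s Ix f] [s' J g] Hx [Hs [H1 H2]] [i Hi]. simpl in *.
  destruct (H1 i) as [j Hj]. exists j. apply peq_trans with x; [apply peq_sym; auto|].
  apply peq_trans with (f i); auto.
Qed.

Lemma sgn_resp : forall t t', peq t t' -> sgn t = sgn t'.
Proof. intros [s Ix f] [s' J g] [Hs _]; auto. Qed.

Lemma memt_resp : forall x x' t t', peq x x' -> peq t t' -> memt x t -> memt x' t'.
Proof.
  intros x x' t t' Hx Ht. unfold memt. rewrite <- (sgn_resp t t' Ht).
  destruct (sgn t).
  - apply pin_resp; auto.
  - intros Hn Hp. apply Hn. apply (pin_resp x' x t' t); auto; apply peq_sym; auto.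
Qed.

Lemma psub_resp : forall t t' u, peq t t' -> psub t u -> psub t' u.
Proof.
  intros t t' u H Hs y Hy. apply Hs. apply (pin_resp y y t' t); auto. apply peq_refl. apply peq_sym; auto.
Qed.

Lemma pin_flip : forall w t, pin w (flip t) <-> pin w t.
Proof. intros w [s Ix f]; simpl; unfold pin; simpl; tauto. Qed.

Lemma sgn_flip : forall t, sgn (flip t) = negb (sgn t).
Proof. intros [s Ix f]; reflexivity. Qed.

Lemma pin_mk : forall x s Ix f, pin x (mk s Ix f) <-> exists i, peq x (f i).
Proof. intros; unfold pin; simpl; tauto. Qed.

Section Model.
Variable A : Type.
Variable lt : A -> A -> Prop.
Hypothesis Hwo : well_ordered_on (fun _ => True) lt.

Lemma lt_trans : forall x y z, lt x y -> lt y z -> lt x z.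
Proof. intros; apply (proj1 Hwo) with y; auto. Qed.
Lemma lt_irr : forall x, ~ lt x x.
Proof. intros; apply (proj1 (proj2 Hwo)); auto. Qed.
Lemma lt_tot : forall x y, lt x y \/ x = y \/ lt y x.
Proof. intros; apply (proj1 (proj2 (proj2 Hwo))); auto. Qed.
Lemma lt_least : forall Q : A -> Prop, (exists x, Q x) -> exists m, Q m /\ forall y, Q y -> m = y \/ lt m y.
Proof. intros Q HQ. apply (proj2 (proj2 (proj2 Hwo))); auto. Qed.

Lemma lt_wf : well_founded lt.
Proof.
  intros a. apply NNPP; intro Ha.
  destruct (lt_least (fun x => ~ Acc lt x)) as [m [Hm Hmin]]; eauto.
  apply Hm. constructor. intros y Hy. apply NNPP; intro Hny.
  destruct (Hmin y Hny) as [-> | Hmy].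
  - apply (lt_irr y); auto.
  - apply (lt_irr m). apply lt_trans with y; auto.
Qed.

Definition Lstep (a : A) (rec : forall b, lt b a -> pre) : pre :=
  mk true {b : A & {H : lt b a & (bool * (idx (rec b H) -> Prop))%type}}
    (fun q => match q with
              | existT _ b (existT _ H (s, X)) =>
                  mk s {i : idx (rec b H) | X i} (fun i => elt (rec b H) (proj1_sig i))
              end).

Definition L : A -> pre := Fix lt_wf (fun _ => pre) Lstep.

Lemma L_eq : forall a, L a = Lstep a (fun b _ => L b).
Proof.
  intros a. unfold L. apply (Fix_eq lt_wf (fun _ => pre) Lstep). intros x f g Hfg.
  assert (f = g) as ->; auto.
  apply functional_extensionality_dep; intros y.
  apply functional_extensionality_dep; intros p. auto.
Qed.

Lemma sgn_L : forall a, sgn (L a) = true.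
Proof. intros a. rewrite L_eq. reflexivity. Qed.

Lemma P1 : forall a y, pin y (L a) <-> exists b, lt b a /\ psub y (L b).
Proof.
  intros a y. rewrite L_eq. unfold Lstep. rewrite pin_mk. split.
  - intros [[b [H [s X]]] Hy]. exists b. split; auto.
    intros w Hw. apply (pin_resp w w y _ (peq_refl w) Hy) in Hw.
    rewrite pin_mk in Hw. destruct Hw as [[i Hi] Hwi]. exists i. auto.
  - intros [b [H Hs]]. destruct y as [s J g].
    exists (existT _ b (existT _ H (s, fun i => exists j, peq (g j) (elt (L b) i)))).
    simpl. split; auto. split.
    + intros j. assert (Hj : pin (g j) (mk s J g)) by (exists j; apply peq_refl).
      destruct (Hs _ Hj) as [i Hi]. exists (exist _ i (ex_intro _ j Hi)). simpl. auto.
    + intros [i [j Hj]]. exists j. simpl. auto.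
Qed.

Lemma psub_refl : forall t, psub t t.
Proof. intros t y; auto. Qed.

Lemma L_mono : forall a c, lt a c -> psub (L a) (L c).
Proof.
  intros a c H y Hy. apply P1 in Hy. destruct Hy as [b [Hb Hs]]. apply P1. exists b.
  split; auto. apply lt_trans with a; auto.
Qed.

Lemma L_N : forall b c, psub (L c) (L b) -> ~ lt b c.
Proof.
  intros b. induction b as [b IH] using (well_founded_ind lt_wf). intros c Hs Hbc.
  assert (H1 : pin (L b) (L c)) by (apply P1; exists b; split; auto; apply psub_refl).
  apply Hs in H1. apply P1 in H1. destruct H1 as [b' [Hb' Hs']].
  apply (IH b' Hb' b Hs' Hb').
Qed.

Lemma L_irr : forall c, ~ pin (L c) (L c).
Proof.
  intros c H. apply P1 in H. destruct H as [b [Hb Hs]]. apply (L_N b c Hs Hb).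
Qed.

Definition U (t : pre) : Prop := exists a, psub t (L a).

Lemma U_elem : forall t y, U t -> pin y t -> U y.
Proof.
  intros t y [a Ha] Hy. apply Ha in Hy. apply P1 in Hy. destruct Hy as [b [_ Hb]]. exists b; auto.
Qed.

Lemma U_L : forall a, U (L a).
Proof. intros a; exists a; apply psub_refl. Qed.

Lemma common : forall a c, exists d, psub (L a) (L d) /\ psub (L c) (L d).
Proof.
  intros a c. destruct (lt_tot a c) as [H | [-> | H]].
  - exists c. split; [apply L_mono; auto | apply psub_refl].
  - exists c. split; apply psub_refl.
  - exists a. split; [apply psub_refl | apply L_mono; auto].
Qed.

Lemma noself : forall a t, psub t (L a) -> ~ pin t t /\ ~ pin (flip t) t.
Proof.
  intros a. induction a as [a IH] using (well_founded_ind lt_wf). intros t Ht. split.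
  - intros H. pose proof (Ht _ H) as H'. apply P1 in H'. destruct H' as [b [Hb Hs]].
    apply (proj1 (IH b Hb t Hs)); auto.
  - intros H. pose proof (Ht _ H) as H'. apply P1 in H'. destruct H' as [b [Hb Hs]].
    apply (proj2 (IH b Hb t (fun w Hw => Hs w (proj2 (pin_flip w t) Hw)))); auto.
Qed.

Lemma ord_char : forall t, U t -> (memt t t <-> sgn t = false).
Proof.
  intros t [a Ha]. destruct (noself a t Ha) as [H1 _]. unfold memt.
  destruct (sgn t); [split; [intro H; contradiction | discriminate] | split; [reflexivity | intros _; exact H1]].
Qed.

Lemma nobig : forall z b, U z -> ~ (forall w, U w -> ~ pin w z -> pin w (L b)).
Proof.
  intros z b [a Ha] H.
  destruct (common a b) as [d [Had Hbd]].
  assert (Hn : ~ pin (L d) z).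
  { intros Hp. apply (L_irr d). apply Had, Ha; auto. }
  apply (L_irr d). apply Hbd. apply H; auto. apply U_L.
Qed.

Definition Mm : Type := {P : pre -> Prop | exists t, U t /\ P = peq t}.

Definition memM (X Y : Mm) : Prop :=
  exists t u, proj1_sig X = peq t /\ proj1_sig Y = peq u /\ memt t u.

Lemma cls_eq : forall t t', peq t = peq t' <-> peq t t'.
Proof.
  intros t t'. split.
  - intros H. assert (peq t' t) by (rewrite <- H; apply peq_refl). apply peq_sym; auto.
  - intros H. apply functional_extensionality; intros u. apply propositional_extensionality.
    split; intros Hu.
    + apply peq_trans with t; auto. apply peq_sym; auto.
    + apply peq_trans with t'; auto.
Qed.

Lemma Mm_eq : forall X Y : Mm, proj1_sig X = proj1_sig Y -> X = Y.
Proof.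
  intros [P HP] [Q HQ] H. simpl in H. subst Q. f_equal. apply proof_irrelevance.
Qed.

Lemma rep : forall X : Mm, exists t, U t /\ proj1_sig X = peq t.
Proof. intros [P HP]; simpl; auto. Qed.

Definition mkM (t : pre) (H : U t) : Mm := exist _ (peq t) (ex_intro _ t (conj H eq_refl)).

Lemma memM_iff : forall X Y t u, proj1_sig X = peq t -> proj1_sig Y = peq u -> (memM X Y <-> memt t u).
Proof.
  intros X Y t u HX HY. split.
  - intros [t' [u' [HX' [HY' Hm]]]]. rewrite HX in HX'. rewrite HY in HY'.
    apply cls_eq in HX'. apply cls_eq in HY'.
    apply (memt_resp t' t u' u); auto; apply peq_sym; auto.
  - intros Hm. exists t, u; auto.
Qed.

Lemma Mm_eq_iff : forall (X Y : Mm) t u, proj1_sig X = peq t -> proj1_sig Y = peq u -> (X = Y <-> peq t u).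
Proof.
  intros X Y t u HX HY. split.
  - intros ->. rewrite HX in HY. apply cls_eq; auto.
  - intros H. apply Mm_eq. rewrite HX, HY. apply cls_eq; auto.
Qed.



Lemma same_memt : forall t u, U t -> U u -> (forall y, U y -> (memt y t <-> memt y u)) -> peq t u.
Proof.
  intros t u Ht Hu H.
  assert (Hpin : sgn t = sgn u -> peq t u).
  { destruct t as [s Ix f], u as [s' J g]. simpl. intros Hs. subst s'. split; auto.
    assert (Hp : forall y, U y -> (pin y (mk s Ix f) <-> pin y (mk s J g))).
    { intros y Hy. specialize (H y Hy). unfold memt in H. simpl in H. destruct s; auto.
      split; intros Hp; apply NNPP; intro Hn; apply H in Hn; auto. }
    split.
    - intros i. assert (Hi : pin (f i) (mk s Ix f)) by (exists i; apply peq_refl).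
      apply Hp in Hi; [| apply U_elem with (mk s Ix f); auto].
      destruct Hi as [j Hj]. exists j; auto.
    - intros j. assert (Hj : pin (g j) (mk s J g)) by (exists j; apply peq_refl).
      apply Hp in Hj; [| apply U_elem with (mk s J g); auto].
      destruct Hj as [i Hi]. exists i; apply peq_sym; auto. }
  assert (Hmix : forall t u, U t -> U u -> sgn t = true -> sgn u = false ->
     (forall y, U y -> (memt y t <-> memt y u)) -> False).
  { clear. intros t u [a Ha] [b Hb] Hst Hsu H.
    destruct (common a b) as [d [Had Hbd]].
    specialize (H (L d) (U_L d)). unfold memt in H. rewrite Hst, Hsu in H.
    assert (H1 : ~ pin (L d) t) by (intros Hp; apply (L_irr d); apply Had, Ha; auto).
    assert (H2 : ~ pin (L d) u) by (intros Hp; apply (L_irr d); apply Hbd, Hb; auto).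
    tauto. }
  destruct (sgn t) eqn:E1, (sgn u) eqn:E2; try (apply Hpin; congruence).
  - exfalso; apply (Hmix t u); auto.
  - exfalso; apply (Hmix u t); auto. intros y Hy; symmetry; auto.
Qed.


Lemma U_flip : forall t, U t -> U (flip t).
Proof. intros t [a Ha]. exists a. intros w Hw. apply Ha. apply pin_flip; auto. Qed.

Lemma memt_flip : forall y t, memt y (flip t) <-> ~ memt y t.
Proof.
  intros y t. unfold memt. rewrite sgn_flip.
  assert (H := pin_flip y t). destruct (sgn t); simpl; rewrite H; split; auto.
  - intros Hn. apply NNPP; auto.
Qed.

Lemma ord_true : forall t, U t -> ~ memt t t -> sgn t = true.
Proof.
  intros t Ht H. destruct (sgn t) eqn:E; auto. exfalso. apply H. apply ord_char; auto.
Qed.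

Definition fM (a : A) : Mm := mkM (L a) (U_L a).

Lemma BLT_ext : forall a b : Mm, (forall x, memM x a <-> memM x b) -> a = b.
Proof.
  intros P Q H. destruct (rep P) as [t [Ht HP]]. destruct (rep Q) as [u [Hu HQ]].
  apply (Mm_eq_iff P Q t u HP HQ). apply same_memt; auto. intros y Hy.
  specialize (H (mkM y Hy)).
  rewrite (memM_iff (mkM y Hy) P y t eq_refl HP), (memM_iff (mkM y Hy) Q y u eq_refl HQ) in H.
  exact H.
Qed.

Lemma BLT_compl : forall a : Mm, exists c, (forall x, memM x c <-> ~ memM x a) /\ (~ memM a a <-> memM c c).
Proof.
  intros P. destruct (rep P) as [t [Ht HP]].
  exists (mkM (flip t) (U_flip t Ht)). split.
  - intros X. destruct (rep X) as [y [Hy HX]].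
    rewrite (memM_iff X (mkM (flip t) (U_flip t Ht)) y (flip t) HX eq_refl), (memM_iff X P y t HX HP). apply memt_flip.
  - rewrite (memM_iff P P t t HP HP), (memM_iff (mkM (flip t) (U_flip t Ht)) (mkM (flip t) (U_flip t Ht)) (flip t) (flip t) eq_refl eq_refl).
    rewrite (ord_char t Ht), (ord_char (flip t) (U_flip t Ht)), sgn_flip.
    destruct (sgn t); simpl; split; intros; try discriminate; auto.
    exfalso; auto.
Qed.

Lemma BLT_sep : forall (F : Mm -> Prop) a, ~ memM a a ->
     exists b, ~ memM b b /\ forall x, memM x b <-> (F x /\ memM x a).
Proof.
  intros F P HP. destruct (rep P) as [t [Ht HPt]].
  rewrite (memM_iff P P t t HPt HPt) in HP. pose proof (ord_true t Ht HP) as Hsgn.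
  set (G := fun y => exists X : Mm, F X /\ proj1_sig X = peq y).
  set (b := mk true {i : idx t | G (elt t i)} (fun i => elt t (proj1_sig i))).
  assert (Hb : U b).
  { destruct Ht as [a Ha]. exists a. intros w Hw. apply Ha. unfold b in Hw. rewrite pin_mk in Hw.
    destruct Hw as [[i Hi] Hw]. exists i; auto. }
  exists (mkM b Hb). split.
  - rewrite (memM_iff (mkM b Hb) (mkM b Hb) b b eq_refl eq_refl). intros Hc. apply (ord_char b Hb) in Hc. discriminate.
  - intros X. destruct (rep X) as [y [Hy HX]].
    rewrite (memM_iff X (mkM b Hb) y b HX eq_refl), (memM_iff X P y t HX HPt).
    unfold memt at 2. rewrite Hsgn. unfold memt. simpl. unfold b. rewrite pin_mk. split.
    + intros [[i [X' [HF HX']]] Hyi]. simpl in Hyi. split.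
      * assert (X' = X) as <-; auto. apply Mm_eq. rewrite HX', HX. apply cls_eq. apply peq_sym; auto.
      * exists i; auto.
    + intros [HF [i Hi]]. assert (HG : G (elt t i)).
      { exists X. split; auto. rewrite HX. apply cls_eq; auto. }
      exists (exist _ i HG). simpl. auto.
Qed.

Lemma memM_L : forall (X : Mm) y a, proj1_sig X = peq y -> (memM X (fM a) <-> pin y (L a)).
Proof.
  intros X y a HX. rewrite (memM_iff X (fM a) y (L a) HX eq_refl). unfold memt. rewrite sgn_L. tauto.
Qed.

Lemma f_mem : forall a b, memM (fM b) (fM a) <-> lt b a.
Proof.
  intros a b. rewrite (memM_L (fM b) (L b) a eq_refl). rewrite P1. split.
  - intros [c [Hc Hs]]. destruct (lt_tot b c) as [H | [-> | H]]; auto.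
    + apply lt_trans with c; auto.
    + exfalso. apply (L_N c b Hs H).
  - intros H. exists b. split; auto. apply psub_refl.
Qed.

Lemma f_ord : forall a, ~ memM (fM a) (fM a).
Proof. intros a H. apply f_mem in H. apply (lt_irr a); auto. Qed.

Lemma sub_conv : forall (Y : Mm) z b, proj1_sig Y = peq z ->
  (subsetM Mm memM Y (fM b) <-> forall w, U w -> memt w z -> pin w (L b)).
Proof.
  intros Y z b HY. split.
  - intros H w Hw Hwz. apply (memM_L (mkM w Hw) w b eq_refl). apply H.
    apply (memM_iff (mkM w Hw) Y w z eq_refl HY); auto.
  - intros H X HX. destruct (rep X) as [w [Hw HXw]]. apply (memM_L X w b HXw).
    apply H; auto. apply (memM_iff X Y w z HXw HY); auto.
Qed.

Lemma csub_conv : forall (Y : Mm) z b, proj1_sig Y = peq z ->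
  (csubsetM Mm memM Y (fM b) <-> forall w, U w -> ~ memt w z -> pin w (L b)).
Proof.
  intros Y z b HY. split.
  - intros H w Hw Hwz. apply (memM_L (mkM w Hw) w b eq_refl). apply H.
    rewrite (memM_iff (mkM w Hw) Y w z eq_refl HY); auto.
  - intros H X HX. destruct (rep X) as [w [Hw HXw]]. apply (memM_L X w b HXw).
    apply H; auto. rewrite (memM_iff X Y w z HXw HY) in HX; auto.
Qed.

Lemma subcsub : forall (Y : Mm) z b, proj1_sig Y = peq z -> U z ->
  ((subsetM Mm memM Y (fM b) \/ csubsetM Mm memM Y (fM b)) <-> psub z (L b)).
Proof.
  intros Y z b HY Hz. rewrite (sub_conv Y z b HY), (csub_conv Y z b HY).
  unfold memt. destruct (sgn z) eqn:E.
  - split.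
    + intros [H | H].
      * intros w Hw. apply H; auto. apply U_elem with z; auto.
      * exfalso. apply (nobig z b Hz); auto.
    + intros H. left. intros w _ Hw. apply H; auto.
  - split.
    + intros [H | H].
      * exfalso. apply (nobig z b Hz); auto.
      * intros w Hw. apply H; auto. apply U_elem with z; auto.
    + intros H. right. intros w _ Hw. apply H. apply NNPP; auto.
Qed.

Lemma LB : forall a (Y : Mm), memM Y (fM a) <-> in_bpot Mm memM (fun c => exists b, lt b a /\ c = fM b) Y.
Proof.
  intros a Y. destruct (rep Y) as [z [Hz HY]]. rewrite (memM_L Y z a HY), P1. split.
  - intros [b [Hb Hs]]. exists (fM b). split; [eauto|]. split; [apply f_ord|].
    apply (subcsub Y z b HY Hz); auto.
  - intros [c [[b [Hb ->]] [_ Hs]]]. exists b. split; auto. apply (subcsub Y z b HY Hz); auto.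
Qed.

Definition hA (a : A) : pre := mk true {b : A | lt b a} (fun b => L (proj1_sig b)).

Lemma U_hA : forall a, U (hA a).
Proof.
  intros a. exists a. intros w Hw. unfold hA in Hw. rewrite pin_mk in Hw. destruct Hw as [[b Hb] Hw].
  simpl in Hw. apply (pin_resp (L b) w (L a) (L a)); [apply peq_sym; auto | apply peq_refl |].
  apply P1. exists b. split; auto. apply psub_refl.
Qed.

Definition hM (a : A) : Mm := mkM (hA a) (U_hA a).

Lemma mem_hM : forall a X, memM X (hM a) <-> exists b, lt b a /\ X = fM b.
Proof.
  intros a X. destruct (rep X) as [y [Hy HX]].
  rewrite (memM_iff X (hM a) y (hA a) HX eq_refl). unfold memt. simpl. unfold hA. rewrite pin_mk. split.
  - intros [[b Hb] H]. exists b. split; auto. apply (Mm_eq_iff X (fM b) y (L b) HX eq_refl); auto.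
  - intros [b [Hb HXb]]. exists (exist _ b Hb). simpl. apply (Mm_eq_iff X (fM b) y (L b) HX eq_refl); auto.
Qed.

Lemma f_level : forall a, is_blevel Mm memM (fM a).
Proof.
  intros a. exists (hM a). split; [split|].
  - rewrite (memM_iff (hM a) (hM a) (hA a) (hA a) eq_refl eq_refl).
    intros Hc. apply (ord_char (hA a) (U_hA a)) in Hc. discriminate.
  - intros x Hx y. apply mem_hM in Hx. destruct Hx as [b [Hb ->]].
    rewrite LB. apply bp_ext. intros c _. split.
    + intros [b' [Hb' ->]]. split; [apply f_mem; auto|]. apply mem_hM. exists b'. split; auto.
      apply lt_trans with b; auto.
    + intros [Hcb Hch]. apply mem_hM in Hch. destruct Hch as [b'' [Hb'' ->]].
      exists b''. split; auto. apply f_mem; auto.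
  - intros y. rewrite LB. apply bp_ext. intros c _. rewrite mem_hM. tauto.
Qed.

Lemma BLT_strat : forall a, ~ memM a a -> exists s, is_blevel Mm memM s /\ subsetM Mm memM a s.
Proof.
  intros P HP. destruct (rep P) as [t [Ht HPt]].
  rewrite (memM_iff P P t t HPt HPt) in HP. pose proof (ord_true t Ht HP) as Hsgn.
  destruct Ht as [a Ha]. exists (fM a). split; [apply f_level|].
  intros X HX. destruct (rep X) as [y [Hy HXy]]. apply (memM_L X y a HXy).
  rewrite (memM_iff X P y t HXy HPt) in HX. unfold memt in HX. rewrite Hsgn in HX. apply Ha; auto.
Qed.

Lemma BLT_Mm : BLT Mm memM.
Proof.
  split; [exact BLT_ext|split; [exact BLT_compl|split; [exact BLT_sep|exact BLT_strat]]].
Qed.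

Lemma f_inj : forall a1 a2, fM a1 = fM a2 -> a1 = a2.
Proof.
  intros a1 a2 H. destruct (lt_tot a1 a2) as [H1 | [H1 | H1]]; auto.
  - exfalso. apply (f_ord a2). rewrite <- H at 1. apply f_mem; auto.
  - exfalso. apply (f_ord a1). rewrite H at 1. apply f_mem; auto.
Qed.

Lemma f_surj : forall s, is_blevel Mm memM s -> exists a, fM a = s.
Proof.
  intros s Hs. apply NNPP; intro Hn.
  destruct (level_wf Mm memM BLT_Mm (fun s => is_blevel Mm memM s /\ ~ exists a, fM a = s))
    as [s0 [[Hs0 Hn0] Hmin]]; [tauto | eauto |].
  assert (below : forall t, is_blevel Mm memM t -> memM t s0 -> exists b, fM b = t).
  { intros t Ht Hts. apply NNPP; intro Hnt. destruct (Hmin t) as [-> | Hst]; [split; auto| |].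
    - apply (level_ord Mm memM BLT_Mm t Ht); auto.
    - apply (level_ord Mm memM BLT_Mm t Ht). apply (level_trans Mm memM BLT_Mm t s0 t); auto. }
  destruct (rep s0) as [z [Hz Hs0z]].
  assert (Hzs : sgn z = true).
  { apply ord_true; auto. rewrite <- (memM_iff s0 s0 z z Hs0z Hs0z). apply level_ord; auto. apply BLT_Mm. }
  destruct Hz as [a0 Ha0].
  destruct (lt_least (fun b => ~ memM (fM b) s0)) as [a [Ha Hamin]].
  { exists a0. rewrite (memM_iff (fM a0) s0 (L a0) z eq_refl Hs0z). unfold memt. rewrite Hzs.
    intros Hp. apply (L_irr a0). apply Ha0; auto. }
  assert (Dchar : forall b, memM (fM b) s0 <-> lt b a).
  { intros b. split.
    - intros Hb. destruct (lt_tot b a) as [H | [-> | H]]; auto.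
      + contradiction.
      + exfalso. apply Ha. apply (level_trans Mm memM BLT_Mm (fM a) (fM b) s0); auto;
        try apply f_level. apply f_mem; auto.
    - intros Hb. apply NNPP; intro Hnb. destruct (Hamin b Hnb) as [-> | H].
      + apply (lt_irr b); auto.
      + apply (lt_irr a). apply lt_trans with b; auto. }
  apply Hn0. exists a. apply BLT_ext. intros y.
  rewrite LB. rewrite (proj2 (lev_below Mm memM BLT_Mm s0 Hs0) y). apply bp_ext. intros c _. split.
  - intros [b [Hb ->]]. split; [apply f_level|]. apply Dchar; auto.
  - intros [Hc Hcs]. destruct (below c Hc Hcs) as [b <-]. exists b. split; auto. apply Dchar; auto.
Qed.

End Model.

Theorem part2 : forall (A : Type) (lt : A -> A -> Prop),
     well_ordered_on (fun _ => True) lt -> inhabited A ->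
     exists (M : Type) (mem : M -> M -> Prop), BLT M mem /\
       exists f : A -> M,
         (forall a, is_blevel M mem (f a)) /\
         (forall a1 a2, f a1 = f a2 -> a1 = a2) /\
         (forall s, is_blevel M mem s -> exists a, f a = s) /\
         (forall a1 a2, lt a1 a2 <-> mem (f a1) (f a2)).
Proof.
  intros A lt Hwo _. exists (Mm A lt Hwo), (memM A lt Hwo). split; [apply BLT_Mm|].
  exists (fM A lt Hwo). split; [apply f_level|]. split; [apply f_inj|]. split; [apply f_surj|].
  intros a1 a2. rewrite f_mem; tauto.
Qed.


Theorem theorem11 :
  (* (1) boolean-levels are well-ordered by ∈ *)
  (forall (M : Type) (mem : M -> M -> Prop), BLT M mem ->
     well_ordered_on (is_blevel M mem) mem) /\
  (* (2) every ordinal α > 0 (i.e. every nonempty well-order) is realized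
         as the order type of the boolean-levels of some model *)
  (forall (A : Type) (lt : A -> A -> Prop),
     well_ordered_on (fun _ => True) lt -> inhabited A ->
     exists (M : Type) (mem : M -> M -> Prop), BLT M mem /\
       exists f : A -> M,
         (forall a, is_blevel M mem (f a)) /\
         (forall a1 a2, f a1 = f a2 -> a1 = a2) /\
         (forall s, is_blevel M mem s -> exists a, f a = s) /\
         (forall a1 a2, lt a1 a2 <-> mem (f a1) (f a2))) /\
  (* (3) comparability of models *)
  (forall (M1 : Type) (mem1 : M1 -> M1 -> Prop)
          (M2 : Type) (mem2 : M2 -> M2 -> Prop),
     BLT M1 mem1 -> BLT M2 mem2 ->
     initial_segment mem1 mem2 \/ initial_segment mem2 mem1).
Proof.
  split; [|split].
  - intros M mem HB. apply part1; auto.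
  - exact part2.
  - exact part3.
Qed.
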